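(* Let $G(\lambda)\in\mathbb F(\lambda)^{p\times m}$, let $L(\lambda)$ be a strong block minimal bases linearization of $G(\lambda)$ as in the context, with transfer function matrix $\widehat G(\lambda)=\begin{bmatrix} M(\lambda)+\widehat K_2^TC(\lambda I_n-A)^{-1}B\widehat K_1 & K_2(\lambda)^T\\ K_1(\lambda) & 0\end{bmatrix}$. (a) Every right minimal basis of $\widehat G(\lambda)$ has the form $\left\{\begin{bmatrix}N_1(\lambda)^T\\ -\widehat N_2(\lambda)M(\lambda)N_1(\lambda)^T\end{bmatrix}h_j(\lambda)\right\}_{j=1}^l$ for some right minimal basis $\{h_1,\dots,h_l\}$ of $G(\lambda)$. (b) Every left minimal basis of $\widehat G(\lambda)$ has the form $\left\{\begin{bmatrix}N_2(\lambda)^T\\ -\widehat N_1(\lambda)M(\lambda)^TN_2(\lambda)^T\end{bmatrix}j_i(\lambda)\right\}_{i=1}^q$ for some left minimal basis $\{j_1,\dots,j_q\}$ of $G(\lambda)$.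
   Context: $\mathbb F$ is an arbitrary field. A polynomial matrix $K\in\mathbb F[\lambda]^{a\times b}$, $a<b$, is a minimal basis if its rows form a minimal basis (polynomial basis of least total degree) of the subspace they span; $K\in\mathbb F[\lambda]^{a_1\times b}$, $N\in\mathbb F[\lambda]^{a_2\times b}$ are dual minimal bases if both are minimal bases, $a_1+a_2=b$ and $KN^T=0$. Strong block minimal bases linearization: write $G=D+C(\lambda I_n-A)^{-1}B$ with $D$ the polynomial part, $\deg D>1$, and $C(\lambda I_n-A)^{-1}B$ a minimal order state-space realization of the strictly proper part. Let $K_1\in\mathbb F[\lambda]^{\widehat m\times(m+\widehat m)}$, $K_2\in\mathbb F[\lambda]^{\widehat p\times(p+\widehat p)}$ be minimal bases with all row degrees $1$, $N_1\in\mathbb F[\lambda]^{m\times(m+\widehat m)}$, $N_2\in\mathbb F[\lambda]^{p\times(p+\widehat p)}$ minimal bases dual to $K_1,K_2$, each with all row degrees equal, and $M(\lambda)$ a $(p+\widehat p)\times(m+\widehat m)$ pencil with $D=N_2MN_1^T$ and $\deg D=\deg N_1+\deg N_2+1$. Let $\widehat K_1\in\mathbb F^{m\times(m+\widehat m)}$, $\widehat K_2\in\mathbb F^{p\times(p+\widehat p)}$, $\widehat N_1\in\mathbb F[\lambda]^{\widehat m\times(m+\widehat m)}$, $\widehat N_2\in\mathbb F[\lambda]^{\widehat p\times(p+\widehat p)}$ be such that $\begin{bmatrix}K_i\\ \widehat K_i\end{bmatrix}$ is unimodular with inverse $\begin{bmatrix}\widehat N_i^T & N_i^T\end{bmatrix}$,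 $i=1,2$. For nonsingular $T,S$, $L(\lambda)=\begin{bmatrix}T(\lambda I_n-A)S & TB\widehat K_1 & 0\\ -\widehat K_2^TCS & M(\lambda) & K_2(\lambda)^T\\ 0 & K_1(\lambda) & 0\end{bmatrix}$. A right (left) minimal basis of a rational matrix $G$ is a set of polynomial vectors forming a minimal basis of $\mathcal N_r(G)=\{x:Gx=0\}$ ($\mathcal N_\ell(G)=\{x:x^TG=0\}$). *)

(* Defs.v *)
From HB Require Import structures.
From mathcomp Require Import all_boot all_order all_algebra.
Set Implicit Arguments. Unset Strict Implicit. Unset Printing Implicit Defensive.
Import Order.TTheory GRing.Theory Num.Theory.
Local Open Scope ring_scope.

Definition RF (F : fieldType) := {fraction {poly F}}.

Definition pmx (F : fieldType) m n (P : 'M[{poly F}]_(m, n)) : 'M[RF F]_(m, n) :=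
  map_mx (@FracField.tofrac _) P.

Definition cpmx (F : fieldType) m n (A : 'M[F]_(m, n)) : 'M[{poly F}]_(m, n) :=
  map_mx (fun a => a%:P) A.

Definition cmx (F : fieldType) m n (A : 'M[F]_(m, n)) : 'M[RF F]_(m, n) :=
  pmx (cpmx A).

Definition lam (F : fieldType) : RF F := FracField.tofrac ('X : {poly F}).

Definition ss_transfer (F : fieldType) p n m
  (C : 'M[F]_(p, n)) (A : 'M[F]_n) (B : 'M[F]_(n, m)) : 'M[RF F]_(p, m) :=
  cmx C *m invmx (lam F *: 1%:M - cmx A) *m cmx B.

Definition minimal_realization (F : fieldType) p n m
  (C : 'M[F]_(p, n)) (A : 'M[F]_n) (B : 'M[F]_(n, m)) : Prop :=
  forall n' (C' : 'M[F]_(p, n')) (A' : 'M[F]_n') (B' : 'M[F]_(n', m)),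
    ss_transfer C' A' B' = ss_transfer C A B -> (n <= n')%N.

Definition rdeg (F : fieldType) m n (P : 'M[{poly F}]_(m, n)) (i : 'I_m) : nat :=
  \max_(j < n) (size (P i j)).-1.
Definition cdeg (F : fieldType) m n (P : 'M[{poly F}]_(m, n)) (j : 'I_n) : nat :=
  \max_(i < m) (size (P i j)).-1.
Definition mdeg (F : fieldType) m n (P : 'M[{poly F}]_(m, n)) : nat :=
  \max_(i < m) rdeg P i.
Definition tdeg (F : fieldType) m n (P : 'M[{poly F}]_(m, n)) : nat :=
  \sum_(j < n) cdeg P j.

Definition poly_basis_of (F : fieldType) n (S : 'cV[RF F]_n -> Prop) l
  (H : 'M[{poly F}]_(n, l)) : Prop :=
  [/\ \rank (pmx H) = l,
      (forall j : 'I_l, S (col j (pmx H))) &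
      (forall x, S x -> exists c : 'cV[RF F]_l, x = pmx H *m c)].

Definition minimal_basis_of (F : fieldType) n (S : 'cV[RF F]_n -> Prop) l
  (H : 'M[{poly F}]_(n, l)) : Prop :=
  poly_basis_of S H /\
  forall l' (H' : 'M[{poly F}]_(n, l')), poly_basis_of S H' -> (tdeg H <= tdeg H')%N.

Definition rnull (F : fieldType) p m (G : 'M[RF F]_(p, m)) (x : 'cV[RF F]_m) : Prop :=
  G *m x = 0.
Definition lnull (F : fieldType) p m (G : 'M[RF F]_(p, m)) (x : 'cV[RF F]_p) : Prop :=
  x^T *m G = 0.

Definition right_minimal_basis (F : fieldType) p m (G : 'M[RF F]_(p, m)) l
  (H : 'M[{poly F}]_(m, l)) : Prop := minimal_basis_of (rnull G) H.
Definition left_minimal_basis (F : fieldType) p m (G : 'M[RF F]_(p, m)) q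
  (J : 'M[{poly F}]_(p, q)) : Prop := minimal_basis_of (lnull G) J.

Definition row_span (F : fieldType) a b (K : 'M[{poly F}]_(a, b)) (x : 'cV[RF F]_b) : Prop :=
  exists c : 'cV[RF F]_a, x = (pmx K)^T *m c.
Definition minimal_basis (F : fieldType) a b (K : 'M[{poly F}]_(a, b)) : Prop :=
  (a < b)%N /\ minimal_basis_of (row_span K) K^T.

Definition dual_minimal_bases (F : fieldType) a1 a2 b
  (K : 'M[{poly F}]_(a1, b)) (N : 'M[{poly F}]_(a2, b)) : Prop :=
  [/\ minimal_basis K, minimal_basis N, (a1 + a2)%N = b & K *m N^T = 0].

(* Main.v *)
Require Import Defs.
From HB Require Import structures.
From mathcomp Require Import all_boot all_order all_algebra.
From mathcomp Require Import zify.
Import GRing.Theory.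
Local Open Scope ring_scope.

Section Deg.
Set Implicit Arguments. Unset Strict Implicit.
Variable F : fieldType.
Local Notation P := {poly F}.

Definition msz m n (A : 'M[P]_(m, n)) k := forall i j, (size (A i j) <= k.+1)%N.
Definition vd m (v : 'cV[P]_m) := cdeg v 0.

Lemma pred_leqS a k : (a.-1 <= k)%N = (a <= k.+1)%N.
Proof. by case: a. Qed.

Lemma cdeg_leP m n (A : 'M[P]_(m, n)) j k :
  (cdeg A j <= k)%N <-> forall i, (size (A i j) <= k.+1)%N.
Proof.
split=> [/bigmax_leqP H i | H]; first by rewrite -pred_leqS; exact: H.
by apply/bigmax_leqP => i _; rewrite pred_leqS.
Qed.

Lemma rdeg_leP m n (A : 'M[P]_(m, n)) i k :
  (rdeg A i <= k)%N <-> forall j, (size (A i j) <= k.+1)%N.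
Proof.
split=> [/bigmax_leqP H j | H]; first by rewrite -pred_leqS; exact: H.
by apply/bigmax_leqP => j _; rewrite pred_leqS.
Qed.

Lemma cdeg_ge m n (A : 'M[P]_(m, n)) j i : ((size (A i j)).-1 <= cdeg A j)%N.
Proof. exact: (@leq_bigmax _ (fun i => (size (A i j)).-1) i). Qed.

Lemma vd_msz m (v : 'cV[P]_m) : msz v (vd v).
Proof. move=> i j; rewrite (ord1 j); exact: (proj1 (cdeg_leP v 0 (vd v)) (leqnn _)). Qed.

Lemma vd_leP m (v : 'cV[P]_m) k : (vd v <= k)%N <-> msz v k.
Proof.
split=> [/cdeg_leP H i j | H]; first by rewrite (ord1 j); exact: H.
by apply/cdeg_leP => i; exact: H.
Qed.

Lemma size_mul_le (p q : P) d e :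
  (size p <= d.+1)%N -> (size q <= e.+1)%N -> (size (p * q)%R <= (d + e).+1)%N.
Proof.
move=> hp hq; apply: leq_trans (size_polyMleq p q) _; lia.
Qed.

Lemma msz_mul m n r (A : 'M[P]_(m, n)) (B : 'M[P]_(n, r)) d e :
  msz A d -> msz B e -> msz (A *m B) (d + e).
Proof.
move=> hA hB i j; rewrite mxE; apply: leq_trans (size_sum _ _ _) _.
by apply/bigmax_leqP => k _; apply: size_mul_le.
Qed.

Lemma msz_add m n (A B : 'M[P]_(m, n)) d : msz A d -> msz B d -> msz (A + B) d.
Proof.
move=> hA hB i j; rewrite mxE; apply: leq_trans (size_polyD _ _) _.
by rewrite geq_max hA hB.
Qed.

Lemma msz_opp m n (A : 'M[P]_(m, n)) d : msz A d -> msz (- A) d.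
Proof. by move=> hA i j; rewrite mxE size_polyN. Qed.

Lemma msz_mono m n (A : 'M[P]_(m, n)) d e : (d <= e)%N -> msz A d -> msz A e.
Proof. by move=> de hA i j; apply: leq_trans (hA i j) _. Qed.

Lemma msz_tr m n (A : 'M[P]_(m, n)) d : msz A d -> msz A^T d.
Proof. by move=> hA i j; rewrite mxE. Qed.

Lemma msz_cpmx m n (E : 'M[F]_(m, n)) : msz (cpmx E) 0.
Proof. by move=> i j; rewrite mxE size_polyC leq_b1. Qed.

Lemma msz_rdeg m n (A : 'M[P]_(m, n)) d : (forall i, rdeg A i = d) -> msz A d.
Proof. by move=> h i j; move: (h i) => /eqP; rewrite eqn_leq => /andP[/rdeg_leP H _]. Qed.

Lemma coef_mul_le (p q : P) d e :
  (size p <= d.+1)%N -> (size q <= e.+1)%N -> (p * q)`_(d + e) = p`_d * q`_e.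
Proof.
move=> hp hq; rewrite coefM (bigD1 (Ordinal (ltn_addr e (ltnSn d)))) //= addKn.
rewrite big1 ?addr0 // => j /eqP neq.
have [ltjd|ltdj|eqjd] := ltngtP j d.
- rewrite [q`_ _]nth_default ?mulr0 //; by apply: leq_trans hq _; rewrite ltn_subRL ltn_add2r.
- by rewrite [p`_ _]nth_default ?mul0r //; exact: leq_trans hp ltdj.
- by case: neq; apply: val_inj.
Qed.

Definition coefmx k m n (A : 'M[P]_(m, n)) : 'M[F]_(m, n) := map_mx (fun p : P => p`_k) A.

Lemma coefmx_mul m n r (A : 'M[P]_(m, n)) (B : 'M[P]_(n, r)) d e :
  msz A d -> msz B e -> coefmx (d + e) (A *m B) = coefmx d A *m coefmx e B.
Proof.
move=> hA hB; apply/matrixP => i j; rewrite !mxE coef_sum.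
by apply: eq_bigr => k _; rewrite !mxE coef_mul_le.
Qed.

Lemma coefmx_cpmx m n (E : 'M[F]_(m, n)) : coefmx 0 (cpmx E) = E.
Proof. by apply/matrixP => i j; rewrite !mxE coefC. Qed.

End Deg.

Lemma nz_entry (V : zmodType) m n (A : 'M[V]_(m, n)) : A != 0 -> exists i j, A i j != 0.
Proof.
move=> nz; case: (boolP [exists i, exists j, A i j != 0]).
  by move=> /existsP[i /existsP[j h]]; exists i, j.
rewrite negb_exists => /forallP H; case/eqP: nz; apply/matrixP => i j.
by move: (H i); rewrite negb_exists => /forallP/(_ j)/negPn/eqP ->; rewrite mxE.
Qed.

Section Pmx.
Set Implicit Arguments. Unset Strict Implicit.
Variable F : fieldType.
Local Notation P := {poly F}.

Lemma pmxM m n r (A : 'M[P]_(m, n)) (B : 'M[P]_(n, r)) : pmx (A *m B) = pmx A *m pmx B.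
Proof. exact: map_mxM. Qed.
Lemma pmxD m n (A B : 'M[P]_(m, n)) : pmx (A + B) = pmx A + pmx B.
Proof. exact: map_mxD. Qed.
Lemma pmxN m n (A : 'M[P]_(m, n)) : pmx (- A) = - pmx A.
Proof. exact: map_mxN. Qed.
Lemma pmx0 m n : pmx (0 : 'M[P]_(m, n)) = 0.
Proof. exact: map_mx0. Qed.
Lemma pmxT m n (A : 'M[P]_(m, n)) : pmx A^T = (pmx A)^T.
Proof. by rewrite /pmx map_trmx. Qed.
Lemma pmx_col m1 m2 n (A : 'M[P]_(m1, n)) (B : 'M[P]_(m2, n)) :
  pmx (col_mx A B) = col_mx (pmx A) (pmx B).
Proof. exact: map_col_mx. Qed.
Lemma pmx_row m n1 n2 (A : 'M[P]_(m, n1)) (B : 'M[P]_(m, n2)) :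
  pmx (row_mx A B) = row_mx (pmx A) (pmx B).
Proof. exact: map_row_mx. Qed.
Lemma pmx1 n : pmx (1%:M : 'M[P]_n) = 1%:M.
Proof. exact: map_mx1. Qed.
Lemma pmx_inj m n : injective (@pmx F m n).
Proof.
move=> A B /matrixP E; apply/matrixP => i j; move: (E i j); rewrite !mxE.
by move/eqP; rewrite tofrac_eq => /eqP.
Qed.
Lemma cpmxM m n r (A : 'M[F]_(m, n)) (B : 'M[F]_(n, r)) : cpmx (A *m B) = cpmx A *m cpmx B.
Proof. exact: map_mxM. Qed.
Lemma cpmxT m n (A : 'M[F]_(m, n)) : cpmx A^T = (cpmx A)^T.
Proof. by rewrite /cpmx map_trmx. Qed.
Lemma cpmx1 n : cpmx (1%:M : 'M[F]_n) = 1%:M.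
Proof. exact: map_mx1. Qed.
Lemma cmxM m n r (A : 'M[F]_(m, n)) (B : 'M[F]_(n, r)) : cmx (A *m B) = cmx A *m cmx B.
Proof. by rewrite /cmx cpmxM pmxM. Qed.
Lemma cmxT m n (A : 'M[F]_(m, n)) : cmx A^T = (cmx A)^T.
Proof. by rewrite /cmx cpmxT pmxT. Qed.
Lemma cmx1 n : cmx (1%:M : 'M[F]_n) = 1%:M.
Proof. by rewrite /cmx cpmx1 pmx1. Qed.

Lemma tdeg_tr m n (A : 'M[P]_(m, n)) : tdeg A^T = \sum_i rdeg A i.
Proof.
by apply: eq_bigr => j _; apply: eq_bigr => k _; rewrite mxE.
Qed.

Lemma size_le_coef (p : P) d : (size p <= d.+1)%N -> p`_d = 0 -> (size p <= d)%N.
Proof.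
move=> hs c0; move: hs; rewrite leq_eqVlt => /orP[/eqP sz|//].
have : lead_coef p == 0 by rewrite lead_coefE sz /= c0.
by rewrite lead_coef_eq0 => /eqP ->; rewrite size_poly0.
Qed.

Lemma rowred a b (K : 'M[P]_(a, b)) d :
  minimal_basis K -> (forall i, rdeg K i = d) ->
  forall c : 'rV[F]_a, c *m coefmx d K = 0 -> c = 0.
Proof.
rewrite /minimal_basis /minimal_basis_of /poly_basis_of.
move=> [_ [[rk _ _] mini]] hd c hc.
case: (eqVneq c 0) => // cn0; exfalso.
have [i0 [i ci]] := nz_entry cn0; rewrite (ord1 i0) {i0} in ci.
pose ei : 'rV[F]_a := delta_mx 0 i.
pose w := c - ei.
pose u := ei^T *m w.
pose E := 1%:M + u.
pose E' := 1%:M - (c 0 i)^-1 *: u.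
have wei : w *m ei^T = (c 0 i - 1)%:M.
  rewrite trmx_delta -colE; apply/matrixP => x y.
  by rewrite (ord1 x) (ord1 y) !mxE !eqxx /=.
have uu : u *m u = (c 0 i - 1) *: u.
  by rewrite /u mulmxA -(mulmxA ei^T) wei mul_mx_scalar scalemxAl.
have EE' : E *m E' = 1%:M.
  rewrite /E /E' mulmxDl mul1mx mulmxBr mulmx1 -scalemxAr uu scalerA.
  rewrite addrAC -!addrA.
  rewrite -scaleNr -scalerBl -{1}[u]scale1r -scalerDl.
  suff -> : 1 + (- ((c 0 i)^-1 * (c 0 i - 1)) - (c 0 i)^-1) = 0 by rewrite scale0r addr0.
  by rewrite mulrBr mulVf // mulr1 opprB addrAC subrr add0r subrr.
have E'E := mulmx1C EE'.
have rowEc : row i E = c.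
  apply/rowP => j; rewrite !mxE big_ord1 !mxE eqxx /= mul1r.
  by rewrite eq_sym addrC subrK.
pose K' := cpmx E *m K.
have mszK : msz K d := msz_rdeg hd.
have cK' : coefmx d K' = E *m coefmx d K.
  by rewrite -{1}[d]add0n coefmx_mul ?coefmx_cpmx //; exact: msz_cpmx.
have rowi : forall j, (size (K' i j) <= d)%N.
  move=> j; apply: size_le_coef; first exact: (msz_mul (msz_cpmx E) mszK).
  have : row i (coefmx d K') = 0 by rewrite cK' row_mul rowEc hc.
  by move/rowP/(_ j); rewrite !mxE.
have pK : pmx K' = cmx E *m pmx K by rewrite pmxM.
have pK2 : pmx K = cmx E' *m pmx K'.
  by rewrite pK mulmxA -cmxM E'E cmx1 mul1mx.
have rkK : \rank (pmx K) = a by rewrite -mxrank_tr -pmxT.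
have rkK' : \rank (pmx K') = a.
  apply/eqP; rewrite eqn_leq; apply/andP; split.
    by rewrite pK; apply: leq_trans (mxrankM_maxr _ _) _; rewrite rkK.
  by rewrite -[X in (X <= _)%N]rkK pK2 mxrankM_maxr.
have basis : poly_basis_of (row_span K) K'^T.
  split.
  - by rewrite pmxT mxrank_tr.
  - move=> j; exists (col j (cmx E)^T).
    by rewrite pmxT pK trmx_mul !colE mulmxA.
  - move=> x [c' ->]; exists ((cmx E')^T *m c').
    by rewrite pmxT pK2 trmx_mul mulmxA.
have := mini _ _ basis; rewrite !tdeg_tr (bigD1 i) //= [X in (_ <= X)%N](bigD1 i) //=.
have hsum : (\sum_(j < a | j != i) rdeg K' j <= \sum_(j < a | j != i) rdeg K j)%N.
  apply: leq_sum => j _; rewrite hd; apply/rdeg_leP => k.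
  exact: (msz_mul (msz_cpmx E) mszK).
case: d hd mszK cK' rowi hc => [|k] hd mszK cK' rowi hc.
- move=> _.
  have rf : row_free (pmx K') by rewrite -row_leq_rank rkK'.
  have r0 : (delta_mx 0 i : 'rV[RF F]_a) *m pmx K' = 0 *m pmx K'.
    rewrite mul0mx -rowE; apply/rowP => j; rewrite !mxE.
    by move: (rowi j); rewrite leqn0 size_poly_eq0 /K' mxE => /eqP ->; rewrite tofrac0.
  move/(row_free_inj rf)/matrixP/(_ 0 i): r0; rewrite !mxE !eqxx /=.
  by move/eqP; rewrite oner_eq0.
- have : (rdeg K' i <= k)%N by apply/rdeg_leP.
  move=> h1 h2; have := leq_trans h2 (leq_add h1 hsum).
  by rewrite hd leq_add2r ltnn.
Qed.

End Pmx.

Section Deg2.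
Set Implicit Arguments. Unset Strict Implicit.
Variable F : fieldType.
Local Notation P := {poly F}.

Lemma exist_max m (v : 'cV[P]_m) : v != 0 -> exists i, size (v i 0) = (vd v).+1.
Proof.
move=> nz; have [i [j hi]] := nz_entry nz; rewrite (ord1 j) in hi.
have m0 : (0 < #|'I_m|)%N by apply/card_gt0P; exists i.
have [i1 e1] := eq_bigmax (fun k => (size (v k 0)).-1) m0.
have ev : vd v = (size (v i1 0)).-1 by [].
case sz: (size (v i1 0)) => [|s].
- exists i; have := cdeg_ge v ord0 i; rewrite -/(vd v) ev sz /=.
  have : (0 < size (v i ord0))%N by rewrite size_poly_gt0.
  have -> : (0 : 'I_1) = ord0 by apply: val_inj.
  by move=> h1 h2; apply/eqP; rewrite eqn_leq -pred_leqS h2 h1.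
- by exists i1; rewrite ev sz.
Qed.

Lemma preddeg a b (K : 'M[P]_(a, b)) d (v : 'cV[P]_a) :
  minimal_basis K -> (forall i, rdeg K i = d) -> v != 0 ->
  (vd v + d <= vd (K^T *m v))%N.
Proof.
move=> mK hd nz; set e := vd v.
have [i0 si0] := exist_max nz.
have mszK : msz K^T d := msz_tr (msz_rdeg hd).
have cm : coefmx (d + e) (K^T *m v) = (coefmx d K)^T *m coefmx e v.
  rewrite coefmx_mul //; last exact: vd_msz.
  by congr (_ *m _); apply/matrixP => i j; rewrite !mxE.
have ve0 : coefmx e v != 0.
  apply/eqP => /matrixP/(_ i0 0); rewrite !mxE => h.
  have : lead_coef (v i0 0) == 0 by rewrite lead_coefE si0 /= h.
  by rewrite lead_coef_eq0 => /eqP h0; move: si0; rewrite h0 size_poly0.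
have : coefmx (d + e) (K^T *m v) != 0.
  rewrite cm; apply: contra ve0 => /eqP h.
  have h2 : (coefmx e v)^T *m coefmx d K = 0.
    by rewrite -(trmxK (coefmx d K)) -trmx_mul h trmx0.
  have := rowred mK hd h2.
  by move=> /(congr1 trmx); rewrite trmxK trmx0 => ->.
move=> /nz_entry [j [z hj]]; rewrite mxE in hj.
have hs : (d + e < size ((K^T *m v) j z))%N.
  by rewrite ltnNge; apply: contra hj => hs; rewrite nth_default.
have := cdeg_ge (K^T *m v) z j; move: hs; rewrite (ord1 z) -/(vd _).
move=> h1 h2; rewrite addnC; apply: leq_trans h2 ; by rewrite -ltnS (ltn_predK h1).
Qed.

Lemma size_prod_le k (f : 'I_k -> P) :
  (forall i, (size (f i) <= 2)%N) -> (size (\prod_i f i)%R <= k.+1)%N.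
Proof.
elim: k f => [|k IH] f hf; first by rewrite big_ord0 size_poly1.
rewrite big_ord_recr /=; apply: leq_trans (size_polyMleq _ _) _.
have := IH (fun i => f (widen_ord (leqnSn k) i)) (fun i => hf _).
have := hf ord_max; move=> h1 h2; set Q := (\prod_(i < k) _)%R; have h3 : (size Q <= k.+1)%N := h2; clear h2; lia.
Qed.

Lemma size_det_le k (Q : 'M[P]_k) : msz Q 1 -> (size (\det Q) <= k.+1)%N.
Proof.
move=> hQ; rewrite /determinant; apply: leq_trans (size_sum _ _ _) _.
apply/bigmax_leqP => s _; rewrite size_Msign; apply: size_prod_le => i; exact: hQ.
Qed.

Lemma adj_msz n (Q : 'M[P]_n) : msz Q 1 -> msz (\adj Q) n.-1.
Proof.
case: n Q => [|n] Q hQ i j; first by case: i.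
rewrite mxE /cofactor size_Msign; apply: size_det_le => x y; rewrite !mxE; exact: hQ.
Qed.

Lemma char_msz n (A : 'M[F]_n) : msz (char_poly_mx A) 1.
Proof.
move=> i j; rewrite !mxE; case: eqP => _ /=.
  by rewrite mulr1n size_XsubC.
by rewrite mulr0n sub0r size_polyN size_polyC; case: (_ != 0).
Qed.

Lemma size_mulF (p r : P) : p != 0 -> r != 0 -> size (p * r) = (size p + size r).-1.
Proof. exact: size_mul. Qed.

Lemma arith1 n s v : ((n.+1 + s).-1 <= (0 + n.-1 + 0 + v).+1)%N -> (s <= v.+1)%N.
Proof. lia. Qed.

Lemma ss_proper p n m (C : 'M[F]_(p, n)) (A : 'M[F]_n) (B : 'M[F]_(n, m))
  (h : 'cV[P]_m) (q : 'cV[P]_p) :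
  ss_transfer C A B *m pmx h = pmx q -> (vd q <= vd h)%N.
Proof.
move=> eq.
pose X := char_poly_mx A.
have eX : lam F *: 1%:M - cmx A = pmx X.
  by rewrite scalemx1 /pmx map_mxB /= map_scalar_mx.
have detX : \det (pmx X) = tofrac (char_poly A) by rewrite det_map_mx.
have chi0 : char_poly A != 0 := monic_neq0 (char_poly_monic A).
have Xu : pmx X \in unitmx by rewrite unitmxE detX unitfE tofrac_eq0.
have adjE : \adj (pmx X) = tofrac (char_poly A) *: invmx (pmx X).
  by rewrite -detX -mul_scalar_mx -mul_adj_mx -mulmxA mulmxV // mulmx1.
move: eq; rewrite /ss_transfer eX => eq.
have key : cpmx C *m \adj X *m cpmx B *m h = char_poly A *: q.
  apply: pmx_inj; rewrite !pmxM [pmx (\adj X)]map_mx_adj adjE.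
  rewrite -scalemxAr -!scalemxAl [pmx (_ *: q)]map_mxZ. congr (_ *: _); exact: eq.
have hm : msz (cpmx C *m \adj X *m cpmx B *m h) (0 + n.-1 + 0 + vd h)%N.
  apply: msz_mul; last exact: vd_msz.
  apply: msz_mul; last exact: msz_cpmx.
  apply: msz_mul; first exact: msz_cpmx.
  exact: adj_msz (char_msz A).
apply/vd_leP => i j.
have := hm i j; rewrite key mxE.
case: (eqVneq (q i j) 0) => [->|qn0]; first by rewrite size_poly0.
rewrite size_mulF // size_char_poly; exact: arith1.
Qed.

Lemma ss_transferT p n m (C : 'M[F]_(p, n)) (A : 'M[F]_n) (B : 'M[F]_(n, m)) :
  (ss_transfer C A B)^T = ss_transfer B^T A^T C^T.
Proof.
have eqT : (lam F *: 1%:M - cmx A)^T = lam F *: 1%:M - (cmx A)^T.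
  by apply/matrixP => i j; rewrite !mxE eq_sym.
by rewrite /ss_transfer !trmx_mul trmx_inv !cmxT mulmxA eqT.
Qed.

End Deg2.

Section Helpers.
Set Implicit Arguments. Unset Strict Implicit.

Lemma colM (R : pzSemiRingType) m n r (A : 'M[R]_(m, n)) (B : 'M[R]_(n, r)) j :
  col j (A *m B) = A *m col j B.
Proof. by rewrite !colE mulmxA. Qed.

Lemma mulmx_cols0 (R : pzSemiRingType) m n r (A : 'M[R]_(m, n)) (B : 'M[R]_(n, r)) :
  (forall j, A *m col j B = 0) -> A *m B = 0.
Proof.
move=> h; apply/matrixP => i j; move/matrixP: (h j) => /(_ i 0); rewrite !mxE.
move=> H; rewrite -[RHS]H; apply: eq_bigr => k _; by rewrite [col _ _ _ _]mxE.
Qed.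

Lemma span_rank (K : fieldType) m n1 n2 (A : 'M[K]_(m, n1)) (B : 'M[K]_(m, n2)) :
  (forall j, exists c : 'cV_n2, col j A = B *m c) -> (\rank A <= \rank B)%N.
Proof.
move=> h; have [f hf] := fin_all_exists h.
have -> : A = B *m \matrix_(i, j) f j i 0.
  apply/matrixP => i j; move/matrixP: (hf j) => /(_ i 0); rewrite !mxE => ->.
  by apply: eq_bigr => k _; rewrite !mxE.
exact: mxrankM_maxl.
Qed.

Variable F : fieldType.
Local Notation P := {poly F}.

Lemma cdeg_col m n (A : 'M[P]_(m, n)) j : cdeg A j = vd (col j A).
Proof. by rewrite /vd /cdeg; under [RHS]eq_bigr => i _ do rewrite mxE. Qed.

Lemma col_pmx m n (A : 'M[P]_(m, n)) j : col j (pmx A) = pmx (col j A).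
Proof. by apply/matrixP => i k; rewrite !mxE. Qed.

Lemma vd_col_le m1 m2 (a : 'cV[P]_m1) (b : 'cV[P]_m2) k :
  (vd a <= k)%N -> (vd b <= k)%N -> (vd (col_mx a b) <= k)%N.
Proof.
move=> /vd_leP ha /vd_leP hb; apply/vd_leP => i j.
by case: (split_ordP i) => x ->; rewrite ?col_mxEu ?col_mxEd.
Qed.

Lemma vd_col_geu m1 m2 (a : 'cV[P]_m1) (b : 'cV[P]_m2) :
  (vd a <= vd (col_mx a b))%N.
Proof.
apply/vd_leP => i j; have := vd_msz (col_mx a b) (lshift m2 i) j.
by rewrite col_mxEu.
Qed.

Lemma rank_cols_nz m l (H : 'M[P]_(m, l)) j :
  \rank (pmx H) = l -> col j H != 0.
Proof.
move=> rk; apply/eqP => c0.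
have rf : row_free (pmx H)^T by rewrite -row_leq_rank mxrank_tr rk.
have : (delta_mx 0 j : 'rV[RF F]_l) *m (pmx H)^T = 0 *m (pmx H)^T.
  rewrite mul0mx -rowE -tr_col col_pmx c0 pmx0 trmx0 //.
move/(row_free_inj rf)/matrixP/(_ 0 j); rewrite !mxE !eqxx /=.
by move/eqP; rewrite oner_eq0.
Qed.

End Helpers.

Section Main.
Set Implicit Arguments. Unset Strict Implicit.
Variable F : fieldType.
Local Notation P := {poly F}.

Lemma part_a (p m mh ph : nat) (G W : 'M[RF F]_(p, m))
  (K1 : 'M[P]_(mh, m + mh)) (K2 : 'M[P]_(ph, p + ph))
  (N1 : 'M[P]_(m, m + mh)) (N2 : 'M[P]_(p, p + ph))
  (M : 'M[P]_(p + ph, m + mh))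
  (K1h : 'M[F]_(m, m + mh)) (K2h : 'M[F]_(p, p + ph))
  (N1h : 'M[P]_(mh, m + mh)) (N2h : 'M[P]_(ph, p + ph)) :
  G = pmx (N2 *m M *m N1^T) + W ->
  (forall (h : 'cV[P]_m) (q : 'cV[P]_p), W *m pmx h = pmx q -> (vd q <= vd h)%N) ->
  minimal_basis N1 -> (forall i j, rdeg N1 i = rdeg N1 j) ->
  minimal_basis K2 -> (forall i, rdeg K2 i = 1%N) ->
  (forall i j, (size (M i j) <= 2)%N) ->
  col_mx K1 (cpmx K1h) *m row_mx N1h^T N1^T = 1%:M ->
  row_mx N1h^T N1^T *m col_mx K1 (cpmx K1h) = 1%:M ->
  col_mx K2 (cpmx K2h) *m row_mx N2h^T N2^T = 1%:M ->
  row_mx N2h^T N2^T *m col_mx K2 (cpmx K2h) = 1%:M ->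
  forall l (Hh : 'M[P]_(m + mh + ph, l)),
  right_minimal_basis
    (block_mx (pmx M + cmx K2h^T *m W *m cmx K1h) (pmx K2^T) (pmx K1) 0) Hh ->
  exists H : 'M[P]_(m, l),
    right_minimal_basis G H /\ Hh = col_mx (N1^T *m H) (- (N2h *m M *m N1^T *m H)).
Proof.
move=> eG prop mN1 eqN1 mK2 dK2 sM h11 h12 h21 h22 l Hh [[rkHh memHh spanHh] miniHh].
move: h11; rewrite mul_col_row scalar_mx_block => /eq_block_mx [e11 e12 e13 e14].
move: h21; rewrite mul_col_row scalar_mx_block => /eq_block_mx [f11 f12 f13 f14].
move: h12 h22; rewrite !mul_row_col => h12 h22.
have h22T : K2^T *m N2h + (cpmx K2h)^T *m N2 = 1%:M.
  by rewrite -[N2h]trmxK -[N2]trmxK -!trmx_mul -linearD /= h22 trmx1.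
pose Ghat := block_mx (pmx M + cmx K2h^T *m W *m cmx K1h) (pmx K2^T) (pmx K1) 0.
pose X : 'M[P]_(m + mh + ph, m) := col_mx N1^T (- (N2h *m M *m N1^T)).
pose Y : 'M[P]_(m, m + mh + ph) := row_mx (cpmx K1h) 0.
have YX : Y *m X = 1%:M by rewrite mul_row_col mul0mx addr0 e14.
have PI : M *m N1^T - K2^T *m (N2h *m M *m N1^T) = (cpmx K2h)^T *m (N2 *m M *m N1^T).
  rewrite !mulmxA -{1}[M *m N1^T]mul1mx -h22T mulmxDl -!mulmxA.
  by rewrite addrAC subrr add0r.
have I1 : Ghat *m pmx X = col_mx (cmx K2h^T *m G) 0.
  have e12' : pmx K1 *m pmx N1^T = 0 by rewrite -pmxM e12 pmx0.
  rewrite /Ghat /X pmx_col mul_block_col mul0mx addr0 e12'.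
  congr col_mx.
  have e14' : pmx (cpmx K1h) *m pmx N1^T = 1%:M by rewrite -pmxM e14 pmx1.
  have PI' : pmx M *m pmx N1^T + pmx K2^T *m pmx (- (N2h *m M *m N1^T)) =
      pmx (cpmx K2h)^T *m pmx (N2 *m M *m N1^T).
    by rewrite -!pmxM -pmxD mulmxN PI.
  rewrite eG /cmx cpmxT mulmxDl -(mulmxA _ (pmx (cpmx K1h))) e14' mulmx1.
  by rewrite addrAC PI' mulmxDr.
have I2 : forall k (Z : 'M[RF F]_(m + mh + ph, k)), Ghat *m Z = 0 ->
    Z = pmx X *m (pmx Y *m Z).
  move=> k Z GZ; rewrite -[Z]vsubmxK in GZ *.
  set Zu := usubmx Z; set Zd := dsubmx Z.
  move: GZ; rewrite /Ghat mul_block_col mul0mx addr0 => /eqP.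
  rewrite col_mx_eq0 => /andP[/eqP A1 /eqP A2].
  rewrite /Y pmx_row pmx0 mul_row_col mul0mx addr0 /X pmx_col mul_col_mx.
  have h12' : pmx N1h^T *m pmx K1 + pmx N1^T *m cmx K1h = 1%:M.
    by rewrite -!pmxM -pmxD h12 pmx1.
  have hu : Zu = pmx N1^T *m (cmx K1h *m Zu).
    by rewrite mulmxA -[LHS]mul1mx -h12' mulmxDl -mulmxA A2 mulmx0 add0r.
  congr col_mx; first exact: hu.
  have f11' : pmx N2h *m pmx K2^T = 1%:M.
    by rewrite -pmxM -[N2h]trmxK -trmx_mul f11 trmx1 pmx1.
  have f13' : pmx N2h *m cmx K2h^T = 0.
    by rewrite /cmx cpmxT -pmxM -[N2h]trmxK -trmx_mul f13 trmx0 pmx0.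
  rewrite -[LHS]mul1mx -f11' -mulmxA.
  move/eqP: A1; rewrite addrC addr_eq0 => /eqP ->.
  rewrite mulmxN mulmxDl mulmxDr !mulmxA f13' !mul0mx addr0.
  by rewrite -/Zu [in LHS]hu pmxN !pmxM !mulNmx !mulmxA ?mulNmx.

have GH0 : Ghat *m pmx Hh = 0 by apply: mulmx_cols0 => j; exact: memHh j.
pose H := Y *m Hh.
have eHh : Hh = X *m H.
  by apply: pmx_inj; rewrite pmxM /H pmxM; exact: I2 _ _ GH0.
have N2K : pmx N2 *m cmx K2h^T = 1%:M.
  by rewrite /cmx cpmxT -pmxM -[N2]trmxK -trmx_mul f14 trmx1 pmx1.
have GX : forall k (Z : 'M[RF F]_(m, k)), Ghat *m (pmx X *m Z) = 0 <-> G *m Z = 0.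
  move=> k Z; rewrite mulmxA I1 mul_col_mx mul0mx; split.
  - move/eqP; rewrite col_mx_eq0 => /andP[/eqP h _].
    have h' : cmx K2h^T *m (G *m Z) = 0 by rewrite mulmxA h.
    by rewrite -[G *m Z]mul1mx -N2K -mulmxA h' mulmx0.
  - by move=> h; rewrite -mulmxA h mulmx0 col_mx0.
have rkH : \rank (pmx H) = l.
  apply/eqP; rewrite eqn_leq rank_leq_col /= -[LL in (LL <= _)%N]rkHh eHh pmxM.
  exact: mxrankM_maxr.
have memH : forall j, rnull G (col j (pmx H)).
  move=> j; rewrite /rnull; apply/(GX 1%N).
  rewrite -colM -pmxM -eHh; exact: memHh j.
have spanH : forall x, rnull G x -> exists c, x = pmx H *m c.
  move=> x Gx; have : Ghat *m (pmx X *m x) = 0 by apply/GX.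
  move/spanHh => [c hc]; exists c.
  by rewrite -[x]mul1mx -pmx1 -YX pmxM -mulmxA hc mulmxA -pmxM.
exists H; split; last by rewrite {1}eHh /X mul_col_mx mulNmx !mulmxA.
split; first by split.
move=> l' H' [rk' mem' span'].
pose Hh' := X *m H'.
have bHh' : poly_basis_of (rnull Ghat) Hh'.
  split.
  - apply/eqP; rewrite eqn_leq rank_leq_col /= -[LL in (LL <= _)%N]rk'.
    have -> : pmx H' = pmx Y *m pmx (X *m H') by rewrite -pmxM mulmxA YX mul1mx.
    exact: mxrankM_maxr.
  - move=> j; rewrite /rnull pmxM colM; apply/GX; exact: mem' j.
  - move=> x Gx; have ex := I2 1%N x Gx.
    have : G *m (pmx Y *m x) = 0 by apply/GX; rewrite -ex.
    move/span' => [c hc]; exists c.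
    by rewrite ex hc mulmxA -pmxM.
have le1 := miniHh _ _ bHh'.
have ll : l' = l.
  apply/eqP; rewrite eqn_leq; apply/andP; split.
  - rewrite -[LL in (LL <= _)%N]rk' -[LL in (_ <= LL)%N]rkH.
    by apply: span_rank => j; exact: spanH _ (mem' j).
  - rewrite -[LL in (LL <= _)%N]rkH -[LL in (_ <= LL)%N]rk'.
    by apply: span_rank => j; exact: span' _ (memH j).
pose d1 := mdeg N1.
have hdN1 : forall i, rdeg N1 i = d1.
  move=> i; apply/eqP; rewrite eqn_leq; apply/andP; split.
  - exact: (@leq_bigmax _ (fun i => rdeg N1 i) i).
  - by apply/bigmax_leqP => k _; rewrite (eqN1 k i).
have mszN1 : msz N1^T d1 := msz_tr (msz_rdeg hdN1).
have up : forall h : 'cV[P]_m, G *m pmx h = 0 -> (vd (X *m h) <= vd h + d1)%N.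
  move=> h Gh.
  have hz : (vd (N1^T *m h) <= d1 + vd h)%N.
    by apply/vd_leP; apply: msz_mul mszN1 (vd_msz h).
  rewrite /X mul_col_mx; apply: vd_col_le; first by rewrite [(vd h + d1)%N]addnC.
  set z := N1^T *m h.
  pose q := - (N2 *m M *m z).
  have Wq : W *m pmx h = pmx q.
    move: Gh; rewrite eG mulmxDl => /eqP; rewrite addrC addr_eq0 => /eqP ->.
    by rewrite /q /z pmxN !pmxM !mulmxA.
  have hq := prop _ _ Wq.
  set y := - (N2h *m M *m N1^T) *m h.
  have hy : y = - (N2h *m (M *m z)) by rewrite /y /z mulNmx !mulmxA.
  have e : K2^T *m N2h = 1%:M - (cpmx K2h)^T *m N2 by rewrite -h22T addrK.
  have key : K2^T *m y = - (M *m z + (cpmx K2h)^T *m q).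
    by rewrite hy mulmxN (mulmxA K2^T N2h) e mulmxBl mul1mx /q mulmxN !mulmxA.
  case: (eqVneq y 0) => [->|yn0].
    by apply/vd_leP => i j; rewrite mxE size_poly0.
  have := preddeg mK2 dK2 yn0.
  have : (vd (K2^T *m y) <= 1 + (d1 + vd h))%N.
    rewrite key; apply/vd_leP; apply: msz_opp; apply: msz_add.
    - by apply: (msz_mul sM); apply/vd_leP.
    - apply: (msz_mono (_ : (0 + vd q <= 1 + (d1 + vd h))%N)); first lia.
      exact: msz_mul (msz_tr (msz_cpmx K2h)) (vd_msz q).
  lia.
have lo : forall h : 'cV[P]_m, h != 0 -> (vd h + d1 <= vd (X *m h))%N.
  move=> h hn0; rewrite /X mul_col_mx; apply: leq_trans (vd_col_geu _ _).
  exact: preddeg mN1 hdN1 hn0.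
have sconst : forall c, (\sum_(j < l) c = l * c)%N.
  by move=> c; rewrite sum_nat_const card_ord.
have sconst' : forall c, (\sum_(j < l') c = l' * c)%N.
  by move=> c; rewrite sum_nat_const card_ord.
have t1 : (tdeg H + l * d1 <= tdeg Hh)%N.
  rewrite /tdeg -sconst -big_split /=; apply: leq_sum => j _.
  rewrite !cdeg_col eHh (colM X); apply: lo; exact: rank_cols_nz rkH.
have t2 : (tdeg Hh' <= tdeg H' + l' * d1)%N.
  rewrite /tdeg -sconst' -big_split /=; apply: leq_sum => j _.
  rewrite !cdeg_col colM; apply: up; rewrite -col_pmx; exact: mem' j.
have := leq_trans t1 (leq_trans le1 t2).
have -> : (l' * d1 = l * d1)%N by rewrite ll.
by rewrite leq_add2r.
Qed.

Lemma mb_ext n (S S' : 'cV[RF F]_n -> Prop) l (H : 'M[P]_(n, l)) :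
  (forall x, S x <-> S' x) -> minimal_basis_of S H -> minimal_basis_of S' H.
Proof.
move=> e [[rk mem sp] mini]; split; first split.
- exact: rk.
- by move=> j; apply/e; exact: mem j.
- by move=> x /e; exact: sp.
- move=> l' H' [rk' mem' sp']; apply: mini; split => //.
  + by move=> j; apply/e; exact: mem' j.
  + by move=> x /e; exact: sp'.
Qed.

Lemma lnull_rnull p m (G : 'M[RF F]_(p, m)) x : lnull G x <-> rnull G^T x.
Proof.
rewrite /lnull /rnull; split => h.
- by rewrite -[x]trmxK -trmx_mul h trmx0.
- by rewrite -[G]trmxK -trmx_mul h trmx0.
Qed.

End Main.

Theorem lemma6p3 (F : fieldType) (p m n mh ph : nat)
  (G : 'M[RF F]_(p, m))
  (D : 'M[{poly F}]_(p, m)) (A : 'M[F]_n) (B : 'M[F]_(n, m)) (C : 'M[F]_(p, n))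
  (K1 : 'M[{poly F}]_(mh, m + mh)) (K2 : 'M[{poly F}]_(ph, p + ph))
  (N1 : 'M[{poly F}]_(m, m + mh)) (N2 : 'M[{poly F}]_(p, p + ph))
  (M : 'M[{poly F}]_(p + ph, m + mh))
  (K1h : 'M[F]_(m, m + mh)) (K2h : 'M[F]_(p, p + ph))
  (N1h : 'M[{poly F}]_(mh, m + mh)) (N2h : 'M[{poly F}]_(ph, p + ph))
  (T S : 'M[F]_n) :
  (* G = D + C (lambda I - A)^{-1} B, D polynomial part, minimal realization *)
  G = pmx D + ss_transfer C A B ->
  minimal_realization C A B ->
  (1 < mdeg D)%N ->
  (* K1, K2 minimal bases with all row degrees 1 *)
  minimal_basis K1 -> minimal_basis K2 ->
  (forall i, rdeg K1 i = 1%N) -> (forall i, rdeg K2 i = 1%N) ->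
  (* N1, N2 minimal bases dual to K1, K2, each with all row degrees equal *)
  dual_minimal_bases K1 N1 -> dual_minimal_bases K2 N2 ->
  (forall i j, rdeg N1 i = rdeg N1 j) -> (forall i j, rdeg N2 i = rdeg N2 j) ->
  (* M is a pencil with D = N2 M N1^T and deg D = deg N1 + deg N2 + 1 *)
  (forall i j, (size (M i j) <= 2)%N) ->
  D = N2 *m M *m N1^T ->
  mdeg D = (mdeg N1 + mdeg N2 + 1)%N ->
  (* [K_i; Kh_i] unimodular with inverse [Nh_i^T N_i^T] *)
  col_mx K1 (cpmx K1h) *m row_mx N1h^T N1^T = 1%:M ->
  row_mx N1h^T N1^T *m col_mx K1 (cpmx K1h) = 1%:M ->
  col_mx K2 (cpmx K2h) *m row_mx N2h^T N2^T = 1%:M ->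
  row_mx N2h^T N2^T *m col_mx K2 (cpmx K2h) = 1%:M ->
  (* T, S nonsingular (they define L but do not enter the transfer matrix) *)
  T \in unitmx -> S \in unitmx ->
  let Ghat : 'M[RF F]_(p + ph + mh, m + mh + ph) :=
    block_mx (pmx M + cmx K2h^T *m ss_transfer C A B *m cmx K1h) (pmx K2^T)
             (pmx K1) 0 in
  (forall l (Hh : 'M[{poly F}]_(m + mh + ph, l)),
     right_minimal_basis Ghat Hh ->
     exists H : 'M[{poly F}]_(m, l),
       right_minimal_basis G H /\
       Hh = col_mx (N1^T *m H) (- (N2h *m M *m N1^T *m H)))
  /\
  (forall q (Jh : 'M[{poly F}]_(p + ph + mh, q)),
     left_minimal_basis Ghat Jh ->
     exists J : 'M[{poly F}]_(p, q),
       left_minimal_basis G J /\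
       Jh = col_mx (N2^T *m J) (- (N1h *m M^T *m N2^T *m J))).
Proof.
move=> eG _ _ mK1 mK2 dK1 dK2 [_ mN1 _ _] [_ mN2 _ _] eqN1 eqN2 sM eD _
  h11 h12 h21 h22 _ _ Ghat.
split.
- move=> l Hh hb.
  have eG' : G = pmx (N2 *m M *m N1^T) + ss_transfer C A B by rewrite eG eD.
  exact: (part_a eG' (fun h q => @ss_proper F _ _ _ C A B h q) mN1 eqN1 mK2 dK2 sM
           h11 h12 h21 h22 hb).
- move=> q Jh hb.
  have eGT : G^T = pmx (N1 *m M^T *m N2^T) + ss_transfer B^T A^T C^T.
    by rewrite eG eD linearD /= -ss_transferT -!pmxT !trmx_mul trmxK mulmxA.
  have sMT : forall i j, (size (M^T i j) <= 2)%N by move=> i j; rewrite mxE.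
  have eGh : Ghat^T = block_mx (pmx M^T + cmx K1h^T *m ss_transfer B^T A^T C^T *m cmx K2h)
                 (pmx K1^T) (pmx K2) 0.
    rewrite /Ghat -ss_transferT; set W := ss_transfer C A B.
    rewrite tr_block_mx trmx0 linearD /= !trmx_mul -!cmxT -!pmxT !trmxK !mulmxA.
    by [].
  have hb' : right_minimal_basis Ghat^T Jh.
    by apply: mb_ext hb => x; exact: lnull_rnull.
  rewrite eGh in hb'.
  have [J [hJ eJ]] := part_a eGT (fun h q => @ss_proper F _ _ _ B^T A^T C^T h q)
           mN2 eqN2 mK1 dK1 sMT h21 h22 h11 h12 hb'.
  exists J; split => //.
  by apply: mb_ext hJ => x; split => /lnull_rnull.
Qed.
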